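(* Let $n\ge 3$ be an integer, $t\in(0,1)$, and let $l$ range over non-negative integers. (1) For $0<\alpha<n$, the quantity $\frac{\Gamma(l+\frac{n-\alpha}2)^2}{\Gamma(l+\frac n2)^2}F\big(l+\frac{n+\alpha}2-1,\frac\alpha2;l+\frac n2;t\big)^2$ is strictly decreasing in $l$. (2) For $\alpha\le0$, the quantity $\frac{\Gamma(l+\frac{n-\alpha}2)^2}{\Gamma(l+\frac n2)^2}t^l F\big(l+\frac{n+\alpha}2-1,\frac\alpha2;l+\frac n2;t\big)^2$ is strictly decreasing in $l$.
   Context: $F(a,b;c;z)=\sum_{r\ge0}\frac{(a)_r(b)_r}{(c)_r}\frac{z^r}{r!}$ for $|z|<1$ is the Gauss hypergeometric function, where $(a)_0=1$ and $(a)_r=a(a+1)\cdots(a+r-1)$. *)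

(* Defs.v *)
From Stdlib Require Import Reals Factorial.
From Coquelicot Require Import Coquelicot.
Open Scope R_scope.

Fixpoint poch (a : R) (r : nat) : R :=
  match r with
  | O => 1
  | S k => poch a k * (a + INR k)
  end.

Definition hyp2F1 (a b c z : R) : R :=
  Series (fun r => poch a r * poch b r / poch c r * z ^ r / INR (fact r)).

Definition Gamma (x : R) : R :=
  RInt_gen (fun s => Rpower s (x - 1) * exp (- s)) (at_right 0) (Rbar_locally p_infty).

(* Main.v *)
Require Import Defs.
From Stdlib Require Import Reals Factorial Lra Lia Psatz.
From Coquelicot Require Import Coquelicot.
Open Scope R_scope.


Definition coef (A B C : R) (n : nat) : R :=
  poch A n * poch B n / poch C n / INR (fact n).

Lemma poch_pos a n : 0 < a -> 0 < poch a n.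
Proof.
  intro Ha; induction n as [|n IH]; simpl; [lra|].
  apply Rmult_lt_0_compat; auto. pose proof (pos_INR n); lra.
Qed.

Lemma INR_fact_pos n : 0 < INR (fact n).
Proof. apply lt_0_INR, lt_O_fact. Qed.

Lemma coef_0 A B C : coef A B C 0 = 1.
Proof. unfold coef; simpl; field. Qed.

Lemma coef_S A B C n : 0 < C ->
  coef A B C (S n) = coef A B C n * ((A + INR n) * (B + INR n) / ((C + INR n) * (INR n + 1))).
Proof.
  intro HC. unfold coef. simpl poch.
  rewrite fact_simpl, mult_INR, S_INR.
  pose proof (poch_pos C n HC). pose proof (INR_fact_pos n). pose proof (pos_INR n).
  field. repeat split; lra.
Qed.

Lemma hyp_eq A B C z : hyp2F1 A B C z = PSeries (coef A B C) z.
Proof.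
  unfold hyp2F1, PSeries. apply Series_ext. intro n. unfold coef, Rdiv. ring.
Qed.

Lemma sum_ge_term (f : nat -> R) N n : (forall k, 0 <= f k) -> (n <= N)%nat -> f n <= sum_f_R0 f N.
Proof.
  intros Hf. induction N as [|N IH]; intro Hn.
  - replace n with 0%nat by lia. simpl. lra.
  - simpl. destruct (Nat.eq_dec n (S N)) as [->|Hne]. 
    + assert (0 <= sum_f_R0 f N). { apply cond_pos_sum. auto. } lra.
    + assert (f n <= sum_f_R0 f N) by (apply IH; lia). specialize (Hf (S N)). lra.
Qed.

Lemma ratio_bounded (a : nat -> R) (y : R) (N : nat) : 0 < y ->
  (forall n, (N <= n)%nat -> Rabs (a (S n)) * y <= Rabs (a n)) ->
  forall n, Rabs (a n * y ^ n) <= sum_f_R0 (fun k => Rabs (a k * y ^ k)) N.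
Proof.
  intros Hy Hr.
  assert (Hk : forall k, Rabs (a (N + k)%nat * y ^ (N + k)) <= Rabs (a N * y ^ N)).
  { induction k as [|k IH].
    - rewrite Nat.add_0_r. lra.
    - replace (N + S k)%nat with (S (N + k)) by lia.
      rewrite Rabs_mult, Rabs_mult in *. simpl pow. rewrite Rabs_mult.
      rewrite (Rabs_right y) by lra.
      specialize (Hr (N + k)%nat ltac:(lia)).
      assert (0 <= Rabs (y ^ (N+k))) by apply Rabs_pos.
      assert (0 <= Rabs (a (S (N + k)))) by apply Rabs_pos.
      nra. }
  intro n. destruct (Compare_dec.le_lt_dec n N) as [Hn|Hn].
  - apply (sum_ge_term (fun k => Rabs (a k * y ^ k))); auto. intro; apply Rabs_pos.
  - replace n with (N + (n - N))%nat by lia. eapply Rle_trans; [apply Hk|].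
    apply (sum_ge_term (fun k => Rabs (a k * y ^ k))); auto. intro; apply Rabs_pos.
Qed.

Lemma nat_large (M : R) : exists N : nat, forall n, (N <= n)%nat -> M <= INR n.
Proof.
  destruct (Rle_dec 0 M) as [HM|HM].
  - destruct (nfloor_ex M HM) as [k Hk]. exists (S k). intros n Hn.
    apply le_INR in Hn. rewrite S_INR in Hn. lra.
  - exists 0%nat. intros n _. pose proof (pos_INR n). lra.
Qed.

Lemma coef_radius A B C x : 0 < C -> Rabs x < 1 -> Rbar_lt (Rabs x) (CV_radius (coef A B C)).
Proof.
  intros HC Hx. set (y := (Rabs x + 1) / 2).
  assert (Hy0 : 0 < y) by (unfold y; pose proof (Rabs_pos x); lra).
  assert (Hy1 : y < 1) by (unfold y; lra).
  set (K := Rabs A + Rabs B + 1).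
  assert (HK : 0 < K) by (unfold K; pose proof (Rabs_pos A); pose proof (Rabs_pos B); lra).
  destruct (nat_large (Rmax 1 ((K * K + 2 * K) / (1 - y)))) as [N HN].
  assert (Hr : forall n, (N <= n)%nat -> Rabs (coef A B C (S n)) * y <= Rabs (coef A B C n)).
  { intros n Hn. specialize (HN n Hn).
    assert (H1 : 1 <= INR n) by (eapply Rle_trans; [apply Rmax_l|exact HN]).
    assert (H2 : (K * K + 2 * K) / (1 - y) <= INR n) by (eapply Rle_trans; [apply Rmax_r|exact HN]).
    assert (H3 : K * K + 2 * K <= (1 - y) * INR n).
    { apply (Rmult_le_compat_l (1 - y)) in H2; [|lra].
      replace ((1 - y) * ((K * K + 2 * K) / (1 - y))) with (K * K + 2 * K) in H2 by (field; lra). lra. }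
    rewrite coef_S by lra. rewrite Rabs_mult.
    set (n' := INR n) in *.
    assert (HA : Rabs (A + n') <= K + n').
    { eapply Rle_trans; [apply Rabs_triang|]. rewrite (Rabs_right n') by lra.
      unfold K; pose proof (Rabs_pos B); lra. }
    assert (HB : Rabs (B + n') <= K + n').
    { eapply Rle_trans; [apply Rabs_triang|]. rewrite (Rabs_right n') by lra.
      unfold K; pose proof (Rabs_pos A); lra. }
    assert (Hq : Rabs ((A + n') * (B + n') / ((C + n') * (n' + 1))) * y <= 1).
    { unfold Rdiv. rewrite Rabs_mult, Rabs_mult, Rabs_Rinv by nra.
      rewrite (Rabs_right ((C + n') * (n' + 1))) by nra.
      assert (Hd : 0 < (C + n') * (n' + 1)) by nra.
      assert (Hnum : Rabs (A + n') * Rabs (B + n') * y <= (C + n') * (n' + 1)).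
      { assert (Rabs (A + n') * Rabs (B + n') <= (K + n') * (K + n')).
        { apply Rmult_le_compat; auto using Rabs_pos. }
        assert ((K + n') * (K + n') * y <= n' * n') by nra.
        pose proof (Rabs_pos (A + n')). pose proof (Rabs_pos (B + n')). nra. }
      apply (Rmult_le_reg_r ((C + n') * (n' + 1))); auto.
      replace (Rabs (A + n') * Rabs (B + n') * / ((C + n') * (n' + 1)) * y * ((C + n') * (n' + 1)))
        with (Rabs (A + n') * Rabs (B + n') * y) by (field; lra). lra. }
    pose proof (Rabs_pos (coef A B C n)). nra. }
  pose proof (ratio_bounded _ y N Hy0 Hr) as Hb.
  destruct (CV_radius_bounded (coef A B C)) as [Hub _].
  assert (Hle : Rbar_le y (CV_radius (coef A B C))).
  { apply Hub. exists (sum_f_R0 (fun k => Rabs (coef A B C k * y ^ k)) N). exact Hb. }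
  destruct (CV_radius (coef A B C)) as [r| |]; simpl in *; [unfold y in Hle; lra | exact I | exact Hle].
Qed.


Lemma isp_incr (a : nat -> R) x l : is_pseries a x l -> is_pseries (PS_incr_1 a) x (x * l).
Proof. intro H. exact (is_pseries_incr_1 a x l H). Qed.
Lemma isp_scal (c : R) (a : nat -> R) x l : is_pseries a x l -> is_pseries (fun n => c * a n) x (c * l).
Proof. intro H. exact (is_pseries_scal c a x l (Rmult_comm x c) H). Qed.
Lemma isp_plus (a b : nat -> R) x la lb : is_pseries a x la -> is_pseries b x lb ->
  is_pseries (fun n => a n + b n) x (la + lb).
Proof. intros H1 H2. exact (is_pseries_plus a b x la lb H1 H2). Qed.

Lemma ode_seq A B C n : 0 < C ->
  let g := coef A B C in
  let d1 := PS_derive g in let d2 := PS_derive d1 in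
  PS_incr_1 d2 n + (-1) * PS_incr_1 (PS_incr_1 d2) n + (C * d1 n + (-(A+B+1)) * PS_incr_1 d1 n)
   + (-(A*B)) * g n = 0.
Proof.
  intros HC g d1 d2.
  assert (Hrec : forall m, (INR m + 1) * (C + INR m) * g (S m) - (A + INR m) * (B + INR m) * g m = 0).
  { intro m. unfold g. rewrite coef_S by lra. pose proof (pos_INR m). field. lra. }
  destruct n as [|[|m]].
  - unfold d2, d1, PS_derive, PS_incr_1; simpl. specialize (Hrec 0%nat). simpl in Hrec.
    change (@zero R_NormedModule) with 0. lra.
  - unfold d2, d1, PS_derive, PS_incr_1; simpl. specialize (Hrec 1%nat). simpl in Hrec.
    change (@zero R_NormedModule) with 0. lra.
  - unfold d2, d1, PS_derive, PS_incr_1. specialize (Hrec (S (S m))).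
    rewrite !S_INR in *. lra.
Qed.

Lemma hyp_ode A B C t : 0 < C -> Rabs t < 1 ->
  let g := coef A B C in
  t * (1 - t) * PSeries (PS_derive (PS_derive g)) t
  + (C - (A + B + 1) * t) * PSeries (PS_derive g) t - A * B * PSeries g t = 0.
Proof.
  intros HC Ht g.
  assert (R0 : Rbar_lt (Rabs t) (CV_radius g)) by (apply coef_radius; auto).
  assert (R1 : Rbar_lt (Rabs t) (CV_radius (PS_derive g))) by (rewrite CV_radius_derive; auto).
  assert (R2 : Rbar_lt (Rabs t) (CV_radius (PS_derive (PS_derive g)))) by (rewrite !CV_radius_derive; auto).
  pose proof (PSeries_correct _ _ (CV_radius_inside _ _ R0)) as H0.
  pose proof (PSeries_correct _ _ (CV_radius_inside _ _ R1)) as H1.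
  pose proof (PSeries_correct _ _ (CV_radius_inside _ _ R2)) as H2.
  set (G := PSeries g t) in *. set (G1 := PSeries (PS_derive g) t) in *.
  set (G2 := PSeries (PS_derive (PS_derive g)) t) in *.
  pose proof (isp_plus _ _ _ _ _
    (isp_plus _ _ _ _ _ (isp_incr _ _ _ H2) (isp_scal (-1) _ _ _ (isp_incr _ _ _ (isp_incr _ _ _ H2))))
    (isp_plus _ _ _ _ _ (isp_scal C _ _ _ H1) (isp_scal (-(A+B+1)) _ _ _ (isp_incr _ _ _ H1)))) as H3.
  pose proof (isp_plus _ _ _ _ _ H3 (isp_scal (-(A*B)) _ _ _ H0)) as H4.
  apply (is_pseries_ext _ (fun _ => 0)) in H4.
  2:{ intro n. apply (ode_seq A B C n HC). }
  apply is_pseries_unique in H4. rewrite PSeries_const_0 in H4.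
  lra.
Qed.


Lemma D_mult f g x df dg : is_derive f x df -> is_derive g x dg ->
  is_derive (fun y => f y * g y) x (df * g x + f x * dg).
Proof. intros H1 H2. exact (is_derive_mult f g x df dg H1 H2 Rmult_comm). Qed.
Lemma D_plus f g x df dg : is_derive f x df -> is_derive g x dg ->
  is_derive (fun y => f y + g y) x (df + dg).
Proof. intros H1 H2. exact (is_derive_plus f g x df dg H1 H2). Qed.
Lemma D_minus f g x df dg : is_derive f x df -> is_derive g x dg ->
  is_derive (fun y => f y - g y) x (df - dg).
Proof. intros H1 H2. exact (is_derive_minus f g x df dg H1 H2). Qed.
Lemma D_const (a : R) x : is_derive (fun _ => a) x 0.
Proof. exact (is_derive_const a x). Qed.
Lemma D_id x : is_derive (fun y : R => y) x 1.
Proof. exact (is_derive_id x). Qed.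
Lemma D_eq (f : R -> R) (x l l' : R) : is_derive f x l -> l = l' -> is_derive f x l'.
Proof. intros H ->; exact H. Qed.

Lemma coef_1 A B C : 0 < C -> coef A B C 1 = A * B / C.
Proof. intro HC. rewrite coef_S, coef_0 by lra. simpl. field. lra. Qed.

Section Euler.
Variables A B C : R.
Hypothesis HC : 0 < C.
Let g := coef A B C.
Let p := coef (C - A) (C - B) C.
Let s := C - A - B.
Let G := PSeries g. Let G1 := PSeries (PS_derive g). Let G2 := PSeries (PS_derive (PS_derive g)).
Let P := PSeries p. Let P1 := PSeries (PS_derive p). Let P2 := PSeries (PS_derive (PS_derive p)).

Let X u := (1 - u) * (G1 u * P u - G u * P1 u) + s * G u * P u.
Let X' u := - (G1 u * P u - G u * P1 u) + (1 - u) * (G2 u * P u - G u * P2 u)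
   + s * (G1 u * P u + G u * P1 u).

Lemma rad_all (A' B' : R) u k : Rabs u < 1 ->
  Rbar_lt (Rabs u) (CV_radius (PS_derive_n k (coef A' B' C))).
Proof. intro Hu. rewrite CV_radius_derive_n. apply coef_radius; auto. Qed.

Lemma dG u : Rabs u < 1 -> is_derive G u (G1 u).
Proof. intro Hu. apply is_derive_PSeries. apply coef_radius; auto. Qed.
Lemma dG1 u : Rabs u < 1 -> is_derive G1 u (G2 u).
Proof. intro Hu. apply is_derive_PSeries. rewrite CV_radius_derive; apply coef_radius; auto. Qed.
Lemma dP u : Rabs u < 1 -> is_derive P u (P1 u).
Proof. intro Hu. apply is_derive_PSeries. apply coef_radius; auto. Qed.
Lemma dP1 u : Rabs u < 1 -> is_derive P1 u (P2 u).
Proof. intro Hu. apply is_derive_PSeries. rewrite CV_radius_derive; apply coef_radius; auto. Qed.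

Lemma dX u : Rabs u < 1 -> is_derive X u (X' u).
Proof.
  intro Hu. unfold X.
  pose proof (dG u Hu). pose proof (dG1 u Hu). pose proof (dP u Hu). pose proof (dP1 u Hu).
  eapply D_eq.
  - apply D_plus.
    + apply D_mult. apply D_minus. apply D_const. apply D_id.
      apply D_minus; apply D_mult; eassumption.
    + apply D_mult. apply D_mult. apply D_const. eassumption. eassumption.
  - unfold X'. ring.
Qed.

Lemma key u : Rabs u < 1 -> u * X' u + C * X u = 0.
Proof.
  intro Hu.
  pose proof (hyp_ode A B C u HC Hu) as EG.
  pose proof (hyp_ode (C - A) (C - B) C u HC Hu) as EP.
  cbv zeta in EG, EP.
  unfold X, X'.
  transitivity (P u * (u * (1 - u) * G2 u + (C - (A + B + 1) * u) * G1 u - A * B * G u)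
    - G u * (u * (1 - u) * P2 u + (C - (C - A + (C - B) + 1) * u) * P1 u - (C - A) * (C - B) * P u)).
  - unfold s. ring.
  - unfold G, G1, G2, P, P1, P2, g, p. rewrite EG, EP. ring.
Qed.

Lemma X0 : X 0 = 0.
Proof.
  unfold X, G, G1, P, P1. rewrite !PSeries_0. unfold PS_derive. simpl INR.
  unfold g, p. rewrite !coef_1, !coef_0 by lra. unfold s. field. lra.
Qed.

Lemma Xzero u : 0 < u < 1 -> X u = 0.
Proof.
  intros Hu.
  set (Y v := Rpower v C * X v).
  assert (HY : forall v, 0 < v < 1 -> is_derive Y v 0).
  { intros v Hv. assert (Hv' : Rabs v < 1) by (rewrite Rabs_right; lra).
    unfold Y. eapply D_eq.
    - apply D_mult. apply is_derive_Reals. apply derivable_pt_lim_power. lra. apply dX; auto.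
    - cbv beta. pose proof (key v Hv') as K.
      replace (Rpower v C) with (Rpower v (C - 1) * v).
      2:{ rewrite <- (Rpower_1 v) at 2 by lra. rewrite <- Rpower_plus. f_equal. ring. }
      transitivity (Rpower v (C - 1) * (v * X' v + C * X v)); [ring|]. rewrite K; ring. }
  assert (HYc : forall e, 0 < e <= u -> Y e = Y u).
  { intros e He. destruct (Req_dec e u) as [->|Hne]; auto.
    apply eq_is_derive; [|lra]. intros v Hv. apply HY. lra. }
  assert (Hcont : continuity_pt X 0).
  { assert (Hd : ex_derive X 0) by (eexists; apply dX; rewrite Rabs_R0; lra).
    apply continuity_pt_filterlim. exact (ex_derive_continuous X 0 Hd). }
  destruct (Req_dec (X u) 0) as [E|E]; auto. exfalso.
  assert (Hpu : 0 < Rpower u C) by (unfold Rpower; apply exp_pos).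
  assert (HYu : 0 < Rabs (Y u)).
  { unfold Y. apply Rabs_pos_lt. apply Rmult_integral_contrapositive; split; lra. }
  unfold continuity_pt, continue_in, limit1_in, limit_in in Hcont. simpl in Hcont.
  destruct (Hcont (Rabs (Y u)) HYu) as [d [Hd Hd2]].
  set (e := Rmin (d / 2) (u / 2)).
  assert (He : 0 < e) by (unfold e; apply Rmin_pos; lra).
  assert (He2 : e <= u / 2) by apply Rmin_r.
  assert (He3 : e <= d / 2) by apply Rmin_l.
  assert (HX : Rabs (X e) < Rabs (Y u)).
  { rewrite X0 in Hd2. unfold R_dist in Hd2. rewrite <- (Rminus_0_r (X e)). apply Hd2. split.
    - unfold D_x, no_cond. split; auto. lra.
    - rewrite Rminus_0_r, Rabs_right; lra. }
  assert (Hpe : 0 < Rpower e C <= 1).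
  { split. unfold Rpower; apply exp_pos. unfold Rpower. rewrite <- exp_0.
    assert (ln e < 0). { rewrite <- ln_1. apply ln_increasing; lra. }
    left. apply exp_increasing. nra. }
  assert (HYe : Y e = Y u) by (apply HYc; lra).
  rewrite <- HYe in HX. unfold Y in HX. rewrite Rabs_mult, (Rabs_right (Rpower e C)) in HX by lra.
  pose proof (Rabs_pos (X e)). nra.
Qed.

Lemma euler_gen t : (forall u, 0 <= u < 1 -> 0 < P u) -> 0 < t < 1 ->
  G t * exp (- s * ln (1 - t)) = P t.
Proof.
  intros HP Ht.
  set (m u := G u * exp (- s * ln (1 - u)) / P u).
  assert (Hm : forall u, 0 <= u <= t -> is_derive m u 0).
  { intros u Hu. assert (Hu' : Rabs u < 1) by (rewrite Rabs_right; lra).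
    assert (HPu : 0 < P u) by (apply HP; lra).
    assert (HXu : X u = 0).
    { destruct (Req_dec u 0) as [->|Hne]. apply X0. apply Xzero. lra. }
    unfold m. eapply D_eq.
    - apply is_derive_div. apply D_mult. apply dG; auto.
      + assert (Hd : is_derive (fun u => exp (- s * ln (1 - u))) u (exp (- s * ln (1 - u)) * s / (1 - u))).
        { auto_derive. lra. replace (1 + - u) with (1 - u) by ring. field. lra. }
        exact Hd.
      + apply dP; auto.
      + lra.
    - unfold X in HXu.
      transitivity (exp (- s * ln (1 - u)) / (P u * P u * (1 - u)) * ((1 - u) * (G1 u * P u - G u * P1 u) + s * G u * P u)).
      + field. split; lra.
      + rewrite HXu. ring. }
  assert (E := eq_is_derive m 0 t (fun u Hu => Hm u Hu) (proj1 Ht)).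
  unfold m in E. 
  assert (HPt : 0 < P t) by (apply HP; lra).
  unfold G, P in E, HPt |- *. rewrite !PSeries_0 in E. unfold g, p in E, HPt |- *. rewrite !coef_0 in E.
  rewrite Rminus_0_r, ln_1, Rmult_0_r, exp_0 in E.
  set (Gt := PSeries (coef A B C) t) in *. set (Pt := PSeries (coef (C - A) (C - B) C) t) in *.
  set (Et := exp (- s * ln (1 - t))) in *.
  assert (H : Gt * Et = Pt * (Gt * Et / Pt)) by (field; lra).
  rewrite H, <- E. field.
Qed.

End Euler.


Lemma ex_ps_R (a : nat -> R) x : Rbar_lt (Rabs x) (CV_radius a) -> ex_series (fun k => a k * x ^ k).
Proof.
  intro H. pose proof (CV_radius_inside a x H) as E. unfold ex_pseries in E.
  eapply ex_series_ext; [|exact E]. intro k. simpl. rewrite pow_n_pow. apply Rmult_comm.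
Qed.

Lemma ps_lt (u v : nat -> R) t : 0 <= t ->
  Rbar_lt (Rabs t) (CV_radius v) ->
  (forall r, 0 <= u r <= v r) -> u 0%nat < v 0%nat -> PSeries u t < PSeries v t.
Proof.
  intros Ht Hv Huv H0.
  assert (Hev := ex_ps_R v t Hv).
  assert (Hle : forall k, 0 <= u k * t ^ k <= v k * t ^ k).
  { intro k. pose proof (pow_le t k Ht). specialize (Huv k). split; nra. }
  assert (Heu : ex_series (fun k => u k * t ^ k)).
  { apply (@ex_series_le R_AbsRing R_CompleteNormedModule _ (fun k => v k * t ^ k)); auto. intro k.
    change (norm (u k * t ^ k)) with (Rabs (u k * t ^ k)). specialize (Hle k).
    rewrite Rabs_right; lra. }
  unfold PSeries. rewrite (Series_incr_1 (fun k => u k * t ^ k)) by auto.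
  rewrite (Series_incr_1 (fun k => v k * t ^ k)) by auto. simpl pow.
  assert (Series (fun k => u (S k) * (t * t ^ k)) <= Series (fun k => v (S k) * (t * t ^ k))).
  { apply Series_le. intro k. apply (Hle (S k)). apply ex_series_incr_1 in Hev. exact Hev. }
  lra.
Qed.

Lemma ps_pos (v : nat -> R) t : 0 <= t -> Rbar_lt (Rabs t) (CV_radius v) ->
  (forall r, 0 <= v r) -> 0 < v 0%nat -> 0 < PSeries v t.
Proof.
  intros. rewrite <- (PSeries_const_0 t). apply ps_lt; auto. intro r; split; auto; lra.
Qed.

Lemma coef_pos A B C r : 0 < A -> 0 < B -> 0 < C -> 0 < coef A B C r.
Proof.
  intros. unfold coef. pose proof (poch_pos A r H). pose proof (poch_pos B r H0).
  pose proof (poch_pos C r H1). pose proof (INR_fact_pos r).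
  unfold Rdiv. apply Rmult_lt_0_compat; [apply Rmult_lt_0_compat|apply Rinv_0_lt_compat; auto].
  apply Rmult_lt_0_compat; auto. apply Rinv_0_lt_compat; auto.
Qed.

Lemma rel_orig c b r : 0 < c -> 0 < c + b - 1 ->
  coef (c + b) b (c + 1) r * (c + b - 1) * (c + INR r) = coef (c + b - 1) b c r * c * (c + b - 1 + INR r).
Proof.
  intros Hc Hcb. induction r as [|r IH].
  - rewrite !coef_0. simpl. ring.
  - rewrite !coef_S by lra. rewrite S_INR. pose proof (pos_INR r).
    assert (E : coef (c + b) b (c + 1) r = coef (c + b - 1) b c r * c * (c + b - 1 + INR r) / ((c + b - 1) * (c + INR r))).
    { rewrite <- IH. field. split; lra. }
    rewrite E. field. repeat split; lra.
Qed.

Lemma rel_euler c b r : 0 < c -> 0 < c - b ->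
  coef (1 - b) (c + 1 - b) (c + 1) r * (c - b) * (c + INR r) = coef (1 - b) (c - b) c r * c * (c - b + INR r).
Proof.
  intros Hc Hcb. induction r as [|r IH].
  - rewrite !coef_0. simpl. ring.
  - rewrite !coef_S by lra. rewrite S_INR. pose proof (pos_INR r).
    assert (E : coef (1 - b) (c + 1 - b) (c + 1) r = coef (1 - b) (c - b) c r * c * (c - b + INR r) / ((c - b) * (c + INR r))).
    { rewrite <- IH. field. split; lra. }
    rewrite E. field. repeat split; lra.
Qed.

Lemma PS_scal_R (c : R) (a : nat -> R) n : PS_scal c a n = c * a n.
Proof. reflexivity. Qed.

Lemma sq_lt X Y : 0 < X -> X < Y -> X ^ 2 < Y ^ 2.
Proof. intros. nra. Qed.

Lemma step1_orig c b t : 1 < c -> 1/2 <= b -> b < c -> 0 < t < 1 ->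
  (c - b) ^ 2 * hyp2F1 (c + b) b (c + 1) t ^ 2 < c ^ 2 * hyp2F1 (c + b - 1) b c t ^ 2.
Proof.
  intros Hc Hb Hbc Ht. rewrite !hyp_eq.
  assert (Hrt : Rabs t < 1) by (rewrite Rabs_right; lra).
  set (h := coef (c + b) b (c + 1)). set (g := coef (c + b - 1) b c).
  assert (Hlt : PSeries (PS_scal (c - b) h) t < PSeries (PS_scal c g) t).
  { apply ps_lt; [lra| | |].
    - rewrite CV_radius_scal by lra. apply coef_radius; lra.
    - intro r. rewrite !PS_scal_R. unfold h, g.
      pose proof (rel_orig c b r ltac:(lra) ltac:(lra)) as E.
      pose proof (coef_pos (c + b) b (c + 1) r ltac:(lra) ltac:(lra) ltac:(lra)).
      pose proof (coef_pos (c + b - 1) b c r ltac:(lra) ltac:(lra) ltac:(lra)).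
      pose proof (pos_INR r). split; [nra|].
      set (hr := coef (c + b) b (c + 1) r) in *. set (gr := coef (c + b - 1) b c r) in *.
      assert (Hd : 0 < (c + b - 1) * (c + INR r)) by nra.
      apply (Rmult_le_reg_r ((c + b - 1) * (c + INR r))); auto.
      replace ((c - b) * hr * ((c + b - 1) * (c + INR r))) with ((c - b) * (hr * (c + b - 1) * (c + INR r))) by ring.
      rewrite E. assert (K : 0 <= c * gr * (b * (c + b - 1) + INR r * (2 * b - 1))) by (apply Rmult_le_pos; nra). lra.
    - rewrite !PS_scal_R. unfold h, g. rewrite !coef_0. lra. }
  rewrite !PSeries_scal in Hlt.
  assert (Hpos : 0 < PSeries h t).
  { apply ps_pos; [lra|apply coef_radius; lra| |].
    intro r; left; apply coef_pos; lra. unfold h; rewrite coef_0; lra. }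
  replace ((c - b) ^ 2 * PSeries h t ^ 2) with (((c - b) * PSeries h t) ^ 2) by ring.
  replace (c ^ 2 * PSeries g t ^ 2) with ((c * PSeries g t) ^ 2) by ring.
  apply sq_lt; auto. apply Rmult_lt_0_compat; lra.
Qed.

Lemma euler_ours c b t : 0 < c -> b < 1 -> b < c -> 0 < t < 1 ->
  PSeries (coef (c + b - 1) b c) t * exp (- (1 - 2 * b) * ln (1 - t)) = PSeries (coef (1 - b) (c - b) c) t.
Proof.
  intros Hc Hb Hbc Ht.
  pose proof (euler_gen (c + b - 1) b c Hc t) as E.
  replace (c - (c + b - 1) - b) with (1 - 2 * b) in E by ring.
  replace (c - (c + b - 1)) with (1 - b) in E by ring.
  apply E; auto. intros u Hu. apply ps_pos; [lra| apply coef_radius; [lra| rewrite Rabs_right; lra] | |].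
  intro r; left; apply coef_pos; lra. rewrite coef_0; lra.
Qed.

Lemma euler_ours1 c b t : 0 < c -> b < 1 -> b < c -> 0 < t < 1 ->
  PSeries (coef (c + b) b (c + 1)) t * exp (- (1 - 2 * b) * ln (1 - t)) = PSeries (coef (1 - b) (c + 1 - b) (c + 1)) t.
Proof.
  intros Hc Hb Hbc Ht.
  pose proof (euler_ours (c + 1) b t ltac:(lra) Hb ltac:(lra) Ht) as E.
  replace (c + 1 + b - 1) with (c + b) in E by ring. exact E.
Qed.

Lemma step1_euler c b t : 1 < c -> 0 < b < 1 -> b < c -> 0 < t < 1 ->
  (c - b) ^ 2 * hyp2F1 (c + b) b (c + 1) t ^ 2 < c ^ 2 * hyp2F1 (c + b - 1) b c t ^ 2.
Proof.
  intros Hc Hb Hbc Ht. rewrite !hyp_eq.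
  assert (Hrt : Rabs t < 1) by (rewrite Rabs_right; lra).
  pose proof (euler_ours c b t ltac:(lra) ltac:(lra) Hbc Ht) as EG.
  pose proof (euler_ours1 c b t ltac:(lra) ltac:(lra) Hbc Ht) as EH.
  set (E := exp (- (1 - 2 * b) * ln (1 - t))) in *.
  assert (HE : 0 < E) by apply exp_pos.
  set (q := coef (1 - b) (c + 1 - b) (c + 1)) in *. set (p := coef (1 - b) (c - b) c) in *.
  assert (Hlt : PSeries (PS_scal (c - b) q) t < PSeries (PS_scal c p) t).
  { apply ps_lt; [lra| | |].
    - rewrite CV_radius_scal by lra. apply coef_radius; lra.
    - intro r. rewrite !PS_scal_R. unfold q, p.
      pose proof (rel_euler c b r ltac:(lra) ltac:(lra)) as Er.
      pose proof (coef_pos (1 - b) (c + 1 - b) (c + 1) r ltac:(lra) ltac:(lra) ltac:(lra)).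
      pose proof (coef_pos (1 - b) (c - b) c r ltac:(lra) ltac:(lra) ltac:(lra)).
      pose proof (pos_INR r). split; [nra|].
      set (hr := coef (1 - b) (c + 1 - b) (c + 1) r) in *. set (gr := coef (1 - b) (c - b) c r) in *.
      assert (Hd : 0 < (c + INR r)) by nra.
      apply (Rmult_le_reg_r (c + INR r)); auto.
      replace ((c - b) * hr * (c + INR r)) with (hr * (c - b) * (c + INR r)) by ring.
      rewrite Er. assert (K : 0 <= c * gr * b) by (apply Rmult_le_pos; nra). lra.
    - rewrite !PS_scal_R. unfold q, p. rewrite !coef_0. lra. }
  rewrite !PSeries_scal in Hlt.
  assert (Hpos : 0 < PSeries q t).
  { apply ps_pos; [lra|apply coef_radius; lra| |].
    intro r; left; apply coef_pos; lra. unfold q; rewrite coef_0; lra. }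
  set (G := PSeries (coef (c + b - 1) b c) t) in *. set (H := PSeries (coef (c + b) b (c + 1)) t) in *.
  set (P := PSeries p t) in *. set (Q := PSeries q t) in *.
  assert (HG : G = P / E) by (rewrite <- EG; field; lra).
  assert (HH : H = Q / E) by (rewrite <- EH; field; lra).
  rewrite HG, HH.
  replace ((c - b) ^ 2 * (Q / E) ^ 2) with (((c - b) * Q) ^ 2 * / (E ^ 2)) by (field; lra).
  replace (c ^ 2 * (P / E) ^ 2) with ((c * P) ^ 2 * / (E ^ 2)) by (field; lra).
  apply Rmult_lt_compat_r. apply Rinv_0_lt_compat. nra.
  apply sq_lt; auto. apply Rmult_lt_0_compat; lra.
Qed.

Lemma amgm_w x w p p' : 0 <= x -> 0 <= w -> 0 <= p -> 0 <= p' -> w * w <= p * p' ->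
  2 * x * w <= p + p' * (x * x).
Proof.
  intros. destruct (Rle_dec (2 * x * w) (p + p' * (x * x))) as [H'|H']; auto.
  exfalso. apply Rnot_le_lt in H'.
  assert (0 <= p + p' * (x * x)) by nra.
  assert ((p + p' * (x * x)) * (p + p' * (x * x)) < (2 * x * w) * (2 * x * w)) by nra.
  assert (0 <= (p - p' * (x * x)) * (p - p' * (x * x))) by apply Rle_0_sqr.
  assert (0 <= (x * x) * (p * p' - w * w)) by (apply Rmult_le_pos; nra).
  nra.
Qed.

Lemma step2 c b t : 1 < c -> b <= 0 -> 0 < t < 1 ->
  t * (c - b) ^ 2 * hyp2F1 (c + b) b (c + 1) t ^ 2 < c ^ 2 * hyp2F1 (c + b - 1) b c t ^ 2.
Proof.
  intros Hc Hb Ht. rewrite !hyp_eq.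
  assert (Hrt : Rabs t < 1) by (rewrite Rabs_right; lra).
  pose proof (euler_ours c b t ltac:(lra) ltac:(lra) ltac:(lra) Ht) as EG.
  pose proof (euler_ours1 c b t ltac:(lra) ltac:(lra) ltac:(lra) Ht) as EH.
  set (E := exp (- (1 - 2 * b) * ln (1 - t))) in *.
  assert (HE : 0 < E) by apply exp_pos.
  set (q := coef (1 - b) (c + 1 - b) (c + 1)) in *. set (p := coef (1 - b) (c - b) c) in *.
  set (w := fun r => p r * (c - b + INR r) / (c + INR r)).
  assert (Hqw : forall r, (c - b) * q r = c * w r).
  { intro r. unfold w, q, p. pose proof (rel_euler c b r ltac:(lra) ltac:(lra)) as Er.
    pose proof (pos_INR r). apply (Rmult_eq_reg_r (c + INR r)); [|lra].
    replace ((c - b) * coef (1 - b) (c + 1 - b) (c + 1) r * (c + INR r)) with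
      (coef (1 - b) (c + 1 - b) (c + 1) r * (c - b) * (c + INR r)) by ring.
    rewrite Er. field. lra. }
  assert (Hp : forall r, 0 < p r) by (intro r; apply coef_pos; lra).
  assert (Hw : forall r, 0 <= w r).
  { intro r. unfold w. pose proof (Hp r). pose proof (pos_INR r).
    apply Rmult_le_pos. nra. left; apply Rinv_0_lt_compat; lra. }
  assert (Hww : forall r, w r * w r <= p r * p (S r)).
  { intro r. unfold w, p. rewrite coef_S by lra. fold p. pose proof (Hp r). pose proof (pos_INR r).
    set (pr := p r) in *. set (x := INR r) in *.
    assert (Hrho : (c - b + x) / (c + x) <= (1 - b + x) / (x + 1)).
    { apply (Rmult_le_reg_r ((c + x) * (x + 1))); [nra|].
      replace ((c - b + x) / (c + x) * ((c + x) * (x + 1))) with ((c - b + x) * (x + 1)) by (field; lra).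
      replace ((1 - b + x) / (x + 1) * ((c + x) * (x + 1))) with ((1 - b + x) * (c + x)) by (field; lra).
      nra. }
    replace (pr * (c - b + x) / (c + x) * (pr * (c - b + x) / (c + x))) with
      (pr * pr * ((c - b + x) / (c + x)) * ((c - b + x) / (c + x))) by (field; lra).
    replace (pr * (pr * ((1 - b + x) * (c - b + x) / ((c + x) * (x + 1))))) with
      (pr * pr * ((c - b + x) / (c + x)) * ((1 - b + x) / (x + 1))) by (field; lra).
    apply Rmult_le_compat_l; auto.
    apply Rmult_le_pos. nra. apply Rmult_le_pos. nra. left; apply Rinv_0_lt_compat; lra. }
  set (x := sqrt t).
  assert (Hx : 0 < x) by (apply sqrt_lt_R0; lra).
  assert (Hxx : x * x = t) by (apply sqrt_sqrt; lra).
  assert (HexP : ex_series (fun k => p k * t ^ k)) by (apply ex_ps_R; apply coef_radius; lra).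
  assert (HexP1 : ex_series (fun k => p (S k) * t ^ (S k))) by (apply (ex_series_incr_1 (fun k => p k * t ^ k)); auto).
  set (bnd := fun k => / 2 * (p k * t ^ k) + / 2 * (p (S k) * t ^ (S k))).
  assert (Hexb : ex_series bnd).
  { assert (H1 : ex_series (fun k => / 2 * (p k * t ^ k))) by exact (@ex_series_scal_l R_AbsRing R_NormedModule (/2) _ HexP).
    assert (H2 : ex_series (fun k => / 2 * (p (S k) * t ^ (S k)))) by exact (@ex_series_scal_l R_AbsRing R_NormedModule (/2) _ HexP1).
    exact (@ex_series_plus R_AbsRing R_NormedModule _ _ H1 H2). }
  assert (Hsb : Series bnd = PSeries p t - / 2).
  { unfold bnd. rewrite Series_plus. rewrite !Series_scal_l.
    unfold PSeries. rewrite (Series_incr_1 (fun k => p k * t ^ k)) by auto. assert (Hp0 : p 0%nat = 1) by (unfold p; apply coef_0). rewrite Hp0. simpl. field.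
    exact (@ex_series_scal_l R_AbsRing R_NormedModule (/2) _ HexP).
    exact (@ex_series_scal_l R_AbsRing R_NormedModule (/2) _ HexP1). }
  assert (HW : x * PSeries w t <= PSeries p t - / 2).
  { rewrite <- Hsb. unfold PSeries. rewrite <- Series_scal_l. apply Series_le; auto.
    intro k. pose proof (pow_le t k ltac:(lra)). split. apply Rmult_le_pos; [lra|]. apply Rmult_le_pos; auto.
    unfold bnd. simpl pow. rewrite <- Hxx.
    pose proof (amgm_w x (w k) (p k) (p (S k)) ltac:(lra) (Hw k) ltac:(left; apply Hp) ltac:(left; apply Hp) (Hww k)).
    rewrite <- Hxx in H. apply (Rmult_le_compat_r ((x * x) ^ k)) in H0; auto. nra. }
  assert (HQ : (c - b) * PSeries q t = c * PSeries w t).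
  { rewrite <- !PSeries_scal. apply PSeries_ext. intro r. rewrite !PS_scal_R. apply Hqw. }
  assert (Hpos : 0 < PSeries q t).
  { apply ps_pos; [lra|apply coef_radius; lra| |].
    intro r; left; apply coef_pos; lra. unfold q; rewrite coef_0; lra. }
  assert (Hlt : x * ((c - b) * PSeries q t) < c * PSeries p t).
  { rewrite HQ. nra. }
  set (G := PSeries (coef (c + b - 1) b c) t) in *. set (H := PSeries (coef (c + b) b (c + 1)) t) in *.
  set (P := PSeries p t) in *. set (Q := PSeries q t) in *.
  assert (HG : G = P / E) by (rewrite <- EG; field; lra).
  assert (HH : H = Q / E) by (rewrite <- EH; field; lra).
  rewrite HG, HH, <- Hxx.
  replace (x * x * (c - b) ^ 2 * (Q / E) ^ 2) with ((x * ((c - b) * Q)) ^ 2 * / (E ^ 2)) by (field; lra).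
  replace (c ^ 2 * (P / E) ^ 2) with ((c * P) ^ 2 * / (E ^ 2)) by (field; lra).
  apply Rmult_lt_compat_r. apply Rinv_0_lt_compat. nra.
  apply sq_lt; auto. apply Rmult_lt_0_compat; [lra|]. apply Rmult_lt_0_compat; lra.
Qed.


Definition gf (x s : R) := Rpower s (x - 1) * exp (- s).

Lemma Rpower_pos' a b : 0 < Rpower a b.
Proof. unfold Rpower; apply exp_pos. Qed.

Lemma gf_pos x s : 0 < gf x s.
Proof. unfold gf. apply Rmult_lt_0_compat. apply Rpower_pos'. apply exp_pos. Qed.

Lemma is_derive_Rpower_l s y : 0 < s -> is_derive (fun u => Rpower u y) s (y * Rpower s (y - 1)).
Proof. intro Hs. apply is_derive_Reals. apply derivable_pt_lim_power. auto. Qed.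

Lemma cont_Rpower_l s y : 0 < s -> continuous (fun u => Rpower u y) s.
Proof. intro Hs. apply (@ex_derive_continuous R_AbsRing R_NormedModule). eexists. apply is_derive_Rpower_l; auto. Qed.

Lemma gf_cont x s : 0 < s -> continuous (gf x) s.
Proof.
  intro Hs. unfold gf. apply (continuous_mult (fun u => Rpower u (x - 1)) (fun u => exp (- u))).
  apply cont_Rpower_l; auto.
  apply (@ex_derive_continuous R_AbsRing R_NormedModule). auto_derive. auto.
Qed.

Lemma gf_ex_RInt x a b : 0 < a -> 0 < b -> ex_RInt (gf x) a b.
Proof.
  intros Ha Hb. apply (@ex_RInt_continuous R_CompleteNormedModule). intros z Hz. apply gf_cont.
  assert (0 < Rmin a b) by (apply Rmin_pos; auto). lra.
Qed.

Lemma minus_R (a b : R) : minus a b = a - b.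
Proof. reflexivity. Qed.




Lemma is_RInt_R_eq (f : R -> R) a b (l l' : R) : is_RInt f a b l -> l = l' -> is_RInt f a b l'.
Proof. intros H ->; exact H. Qed.

Lemma pow_int x a b : 0 < x -> 0 < a -> 0 < b ->
  is_RInt (fun s => Rpower s (x - 1)) a b ((Rpower b x - Rpower a x) / x).
Proof.
  intros Hx Ha Hb.
  assert (Hm : 0 < Rmin a b) by (apply Rmin_pos; auto).
  eapply is_RInt_R_eq.
  apply (@is_RInt_derive R_CompleteNormedModule (fun u => Rpower u x / x)).
  3:{ rewrite minus_R. field. lra. }
  - intros s Hs. eapply D_eq.
    + apply (is_derive_ext (fun u => / x * Rpower u x)). intro; unfold Rdiv; apply Rmult_comm.
      apply (is_derive_scal (fun u => Rpower u x) s (/ x)). apply is_derive_Rpower_l. lra.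
    + field. lra.
  - intros s Hs. apply cont_Rpower_l. lra.
Qed.

Lemma exp_int a b : is_RInt (fun s => exp (- s / 2)) a b (2 * exp (- a / 2) - 2 * exp (- b / 2)).
Proof.
  eapply is_RInt_R_eq.
  apply (@is_RInt_derive R_CompleteNormedModule (fun u => - 2 * exp (- u / 2))).
  3:{ rewrite minus_R. ring. }
  - intros s Hs. eapply D_eq. auto_derive. auto. reflexivity. cbv beta. replace (- s * / 2) with (- s / 2) by field. field.
  - intros s Hs. apply (@ex_derive_continuous R_AbsRing R_NormedModule). auto_derive. auto.
Qed.

Lemma exp_pow_INR y N : exp y ^ N = exp (INR N * y).
Proof.
  induction N as [|N IH]. simpl. rewrite Rmult_0_l, exp_0. auto.
  rewrite S_INR. simpl. rewrite IH. rewrite <- exp_plus. f_equal. ring.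
Qed.

Lemma tail_bound x : 0 < x -> exists K, 0 < K /\ forall s, 1 <= s -> gf x s <= K * exp (- s / 2).
Proof.
  intro Hx.
  destruct (nfloor_ex (Rabs x) (Rabs_pos x)) as [N0 HN0].
  set (N := S N0). assert (HN : x - 1 <= INR N /\ 1 <= INR N).
  { unfold N. rewrite S_INR. pose proof (pos_INR N0). pose proof (Rle_abs x). lra. }
  exists ((2 * INR N) ^ N). split. apply pow_lt. lra.
  intros s Hs. unfold gf.
  assert (H1 : Rpower s (x - 1) <= s ^ N).
  { rewrite <- Rpower_pow by lra. apply Rle_Rpower; lra. }
  assert (H2 : s / (2 * INR N) < exp (s / (2 * INR N))).
  { pose proof (exp_ineq1 (s / (2 * INR N))). assert (0 < s / (2 * INR N)).
    { apply Rdiv_lt_0_compat; lra. } 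
    assert (H2b : s / (2 * INR N) <> 0) by lra. specialize (H H2b). lra. }
  assert (H3 : s ^ N <= (2 * INR N) ^ N * exp (s / 2)).
  { replace (exp (s / 2)) with (exp (s / (2 * INR N)) ^ N).
    2:{ rewrite exp_pow_INR. f_equal. field. lra. }
    rewrite <- Rpow_mult_distr.
    replace s with (2 * INR N * (s / (2 * INR N))) at 1 by (field; lra).
    apply pow_incr. split. apply Rmult_le_pos. lra. left; apply Rdiv_lt_0_compat; lra.
    apply Rmult_le_compat_l; lra. }
  assert (E : exp (s / 2) * exp (- s) = exp (- s / 2)).
  { rewrite <- exp_plus. f_equal. field. }
  pose proof (exp_pos (- s)). pose proof (Rpower_pos' s (x - 1)).
  assert (H5 : Rpower s (x - 1) * exp (- s) <= (2 * INR N) ^ N * exp (s / 2) * exp (- s)).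
  { apply Rmult_le_compat_r. lra. lra. }
  rewrite Rmult_assoc, E in H5. exact H5.
Qed.

Lemma RInt_small x a a' : 0 < x -> 0 < a -> a <= a' -> a' <= 1 ->
  0 <= RInt (gf x) a a' <= Rpower a' x / x.
Proof.
  intros Hx Ha Haa Ha1. split.
  - apply RInt_ge_0; auto. apply gf_ex_RInt; lra. intros s Hs; left; apply gf_pos.
  - assert (HI := pow_int x a a' Hx Ha ltac:(lra)).
    eapply Rle_trans.
    + apply (RInt_le (gf x) (fun s => Rpower s (x - 1))); auto. apply gf_ex_RInt; lra.
      eexists; exact HI.
      intros s Hs. unfold gf. pose proof (Rpower_pos' s (x - 1)).
      assert (exp (- s) <= 1). { rewrite <- exp_0. left. apply exp_increasing. lra. }
      nra.
    + rewrite (is_RInt_unique _ _ _ _ HI). pose proof (Rpower_pos' a x).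
      unfold Rdiv. apply Rmult_le_compat_r. left; apply Rinv_0_lt_compat; lra. lra.
Qed.

Lemma RInt_tail x K b b' : 0 < x -> 0 < K -> (forall s, 1 <= s -> gf x s <= K * exp (- s / 2)) ->
  1 <= b -> b <= b' -> 0 <= RInt (gf x) b b' <= 2 * K * exp (- b / 2).
Proof.
  intros Hx HK Hb Hb1 Hbb. split.
  - apply RInt_ge_0; auto. apply gf_ex_RInt; lra. intros s Hs; left; apply gf_pos.
  - assert (HI : is_RInt (fun s => K * exp (- s / 2)) b b' (K * (2 * exp (- b / 2) - 2 * exp (- b' / 2)))).
    { exact (is_RInt_scal _ b b' K _ (exp_int b b')). }
    eapply Rle_trans.
    + apply (RInt_le (gf x) (fun s => K * exp (- s / 2))); auto. apply gf_ex_RInt; lra.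
      eexists; exact HI.
      intros s Hs. apply Hb. lra.
    + rewrite (is_RInt_unique _ _ _ _ HI). pose proof (exp_pos (- b' / 2)). nra.
Qed.

Lemma ballR (x : R) (e : posreal) y : Rabs (y - x) < e -> @ball R_UniformSpace x e y.
Proof. intro H. exact H. Qed.
Lemma ballR' (x : R) (e : posreal) y : @ball R_UniformSpace x e y -> Rabs (y - x) < e.
Proof. intro H. exact H. Qed.
Lemma loc0 (d : R) : 0 < d -> at_right 0 (fun a => 0 < a < d).
Proof. intro Hd. exists (mkposreal d Hd). intros y Hy Hy0. apply ballR' in Hy. simpl in Hy.
  rewrite Rminus_0_r, Rabs_right in Hy; lra. Qed.
Lemma locinf (M : R) : Rbar_locally p_infty (fun b => M < b).
Proof. exists M. auto. Qed.

Lemma small_diff x a1 a2 d : 0 < x -> 0 < a1 < d -> 0 < a2 < d -> d <= 1 ->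
  Rabs (RInt (gf x) a2 a1) <= Rpower d x / x.
Proof.
  intros Hx H1 H2 Hd.
  assert (Hmono : forall a, 0 < a < d -> Rpower a x / x <= Rpower d x / x).
  { intros a Ha. unfold Rdiv. apply Rmult_le_compat_r. left; apply Rinv_0_lt_compat; lra.
    apply Rle_Rpower_l; lra. }
  destruct (Rle_dec a2 a1) as [Hle|Hlt].
  - destruct (RInt_small x a2 a1 Hx ltac:(lra) Hle ltac:(lra)). rewrite Rabs_right by lra.
    eapply Rle_trans; eauto.
  - assert (Hle : a1 <= a2) by lra.
    destruct (RInt_small x a1 a2 Hx ltac:(lra) Hle ltac:(lra)).
    rewrite <- (opp_RInt_swap (gf x) a1 a2) by (apply gf_ex_RInt; lra).
    change (opp (RInt (gf x) a1 a2)) with (- RInt (gf x) a1 a2).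
    rewrite Rabs_Ropp, Rabs_right by lra. eapply Rle_trans; eauto.
Qed.

Lemma tail_diff x K b1 b2 M : 0 < x -> 0 < K -> (forall s, 1 <= s -> gf x s <= K * exp (- s / 2)) ->
  1 <= M -> M < b1 -> M < b2 -> Rabs (RInt (gf x) b1 b2) <= 2 * K * exp (- M / 2).
Proof.
  intros Hx HK HKb HM H1 H2.
  assert (Hmono : forall b, M < b -> 2 * K * exp (- b / 2) <= 2 * K * exp (- M / 2)).
  { intros b Hb. apply Rmult_le_compat_l. lra. left. apply exp_increasing. lra. }
  destruct (Rle_dec b1 b2) as [Hle|Hlt].
  - destruct (RInt_tail x K b1 b2 Hx HK HKb ltac:(lra) Hle). rewrite Rabs_right by lra.
    eapply Rle_trans; eauto.
  - assert (Hle : b2 <= b1) by lra.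
    destruct (RInt_tail x K b2 b1 Hx HK HKb ltac:(lra) Hle).
    rewrite <- (opp_RInt_swap (gf x) b2 b1) by (apply gf_ex_RInt; lra).
    change (opp (RInt (gf x) b2 b1)) with (- RInt (gf x) b2 b1).
    rewrite Rabs_Ropp, Rabs_right by lra. eapply Rle_trans; eauto.
Qed.

Lemma gamma_ex x : 0 < x -> exists L, is_RInt_gen (gf x) (at_right 0) (Rbar_locally p_infty) L.
Proof.
  intro Hx. destruct (tail_bound x Hx) as [K [HK HKb]].
  assert (Hprop : ProperFilter (filter_prod (at_right 0) (Rbar_locally p_infty))).
  { apply filter_prod_proper; try apply at_right_proper_filter; try apply Rbar_locally_filter. }
  assert (Hfex : filter_prod (at_right 0) (Rbar_locally p_infty)
    (fun ab => (exists y : R_CompleteSpace, is_RInt (gf x) (fst ab) (snd ab) y) /\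
       (forall y1 y2 : R_CompleteSpace, is_RInt (gf x) (fst ab) (snd ab) y1 -> is_RInt (gf x) (fst ab) (snd ab) y2 -> y1 = y2))).
  { apply (Filter_prod _ _ _ (fun a => 0 < a < 1) (fun b => 0 < b)). apply loc0; lra. apply locinf.
    intros a b Ha Hb. simpl. split.
    + exists (RInt (gf x) a b). exact (@RInt_correct R_CompleteNormedModule (gf x) a b (gf_ex_RInt x a b ltac:(lra) ltac:(lra))).
    + intros y1 y2 E1 E2. rewrite <- (is_RInt_unique _ _ _ _ E1). apply is_RInt_unique; auto. }
  enough (Hex : exists y : R_CompleteSpace, filterlimi (fun ab => is_RInt (gf x) (fst ab) (snd ab))
     (filter_prod (at_right 0) (Rbar_locally p_infty)) (locally y)).
  { destruct Hex as [L HL]. exists L. exact HL. }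
  apply (proj1 (@filterlimi_locally_cauchy (R * R) R_CompleteSpace _ Hprop (fun ab => is_RInt (gf x) (fst ab) (snd ab)) Hfex)).
  intro eps. destruct eps as [e He]. simpl.
    set (d := Rmin 1 (Rpower (x * e / 4) (/ x))).
    assert (Hd0 : 0 < d) by (apply Rmin_pos; [lra | apply Rpower_pos']).
    assert (Hd1 : d <= 1) by apply Rmin_l.
    assert (Hdx : Rpower d x / x <= e / 4).
    { assert (Rpower d x <= x * e / 4).
      { eapply Rle_trans. apply Rle_Rpower_l. lra. split. auto. apply Rmin_r.
        rewrite Rpower_mult. replace (/ x * x) with 1 by (field; lra). rewrite Rpower_1. lra.
        nra. }
      apply (Rmult_le_reg_r x); auto. replace (Rpower d x / x * x) with (Rpower d x) by (field; lra). lra. }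
    set (M := Rmax 1 (- 2 * ln (e / (8 * K)))).
    assert (HM1 : 1 <= M) by apply Rmax_l.
    assert (HMe : 2 * K * exp (- M / 2) <= e / 4).
    { assert (- M / 2 <= ln (e / (8 * K))).
      { pose proof (Rmax_r 1 (- 2 * ln (e / (8 * K)))). fold M in H. lra. }
      assert (exp (- M / 2) <= e / (8 * K)).
      { rewrite <- (exp_ln (e / (8 * K))). destruct H as [H|H]. left; apply exp_increasing; auto.
        rewrite H; lra. apply Rdiv_lt_0_compat; lra. }
      apply (Rmult_le_compat_l (2 * K)) in H0; [|lra].
      replace (2 * K * (e / (8 * K))) with (e / 4) in H0 by (field; lra). lra. }
    exists (fun ab => 0 < fst ab < d /\ M < snd ab). split.
    + apply (Filter_prod _ _ _ (fun a => 0 < a < d) (fun b => M < b)). apply loc0; lra. apply locinf.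
      intros a b Ha Hb. simpl. auto.
    + intros [a1 b1] [a2 b2] [Ha1 Hb1] [Ha2 Hb2] u' v' Hu Hv. simpl in *.
      apply (@is_RInt_unique R_CompleteNormedModule) in Hu. apply (@is_RInt_unique R_CompleteNormedModule) in Hv. subst u' v'.
      change (Rabs (RInt (gf x) a2 b2 - RInt (gf x) a1 b1) < e).
      assert (E : RInt (gf x) a2 b2 = RInt (gf x) a2 a1 + RInt (gf x) a1 b1 + RInt (gf x) b1 b2).
      { rewrite <- (RInt_Chasles (gf x) a2 b1 b2) by (apply gf_ex_RInt; lra).
        rewrite <- (RInt_Chasles (gf x) a2 a1 b1) by (apply gf_ex_RInt; lra). reflexivity. }
      rewrite E.
      pose proof (small_diff x a1 a2 d Hx Ha1 Ha2 Hd1).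
      pose proof (tail_diff x K b1 b2 M Hx HK HKb HM1 Hb1 Hb2).
      replace (RInt (gf x) a2 a1 + RInt (gf x) a1 b1 + RInt (gf x) b1 b2 - RInt (gf x) a1 b1)
        with (RInt (gf x) a2 a1 + RInt (gf x) b1 b2) by ring.
      eapply Rle_lt_trans. apply Rabs_triang. lra.
Qed.

Lemma gamma_val x L : is_RInt_gen (gf x) (at_right 0) (Rbar_locally p_infty) L -> Gamma x = L.
Proof.
  intro H. unfold Gamma. apply (is_RInt_gen_unique (gf x) L H).
Qed.

Lemma RInt12_pos x : 0 < x -> 0 < RInt (gf x) 1 2.
Proof.
  intro Hx. set (k := exp (- Rabs (x - 1) * ln 2 - 2)).
  assert (Hk : 0 < k) by apply exp_pos.
  assert (Hle : RInt (fun _ => k) 1 2 <= RInt (gf x) 1 2).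
  { apply RInt_le. lra. apply ex_RInt_const. apply gf_ex_RInt; lra.
    intros s Hs. unfold gf, k, Rpower. rewrite <- exp_plus. left. apply exp_increasing.
    assert (0 < ln s) by (rewrite <- ln_1; apply ln_increasing; lra).
    assert (ln s < ln 2) by (apply ln_increasing; lra).
    assert (- Rabs (x - 1) * ln 2 <= (x - 1) * ln s).
    { destruct (Rle_dec 0 (x - 1)). rewrite Rabs_right by lra. nra.
      rewrite Rabs_left by lra. nra. }
    lra. }
  rewrite RInt_const in Hle. change (scal (2 - 1) k) with ((2 - 1) * k) in Hle. lra.
Qed.

Lemma gamma_pos x : 0 < x -> 0 < Gamma x.
Proof.
  intro Hx. destruct (gamma_ex x Hx) as [L HL]. rewrite (gamma_val x L HL).
  set (m := RInt (gf x) 1 2). assert (Hm : 0 < m) by apply RInt12_pos, Hx.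
  destruct (Rlt_dec 0 L) as [|HL0]; auto. exfalso.
  pose proof (proj1 (filterlimi_locally _ L) HL (mkposreal m Hm)) as H. simpl in H.
  assert (H2 : filter_prod (at_right 0) (Rbar_locally p_infty)
     (fun ab => (exists z : R, is_RInt (gf x) (fst ab) (snd ab) z /\ ball L m z) /\ (0 < fst ab < 1 /\ 2 < snd ab))).
  { apply filter_and. exact H. apply (Filter_prod _ _ _ (fun a => 0 < a < 1) (fun b => 2 < b)).
    apply loc0; lra. apply locinf. intros; simpl; auto. }
  assert (Hprop : ProperFilter (filter_prod (at_right 0) (Rbar_locally p_infty))).
  { apply filter_prod_proper; try apply at_right_proper_filter; try apply Rbar_locally_filter. }
  destruct (@filter_ex _ _ Hprop _ H2) as [[a b] [[z [Hz Hb]] [Ha Hb2]]]. simpl in *.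
  apply (@is_RInt_unique R_CompleteNormedModule) in Hz. subst z.
  change (Rabs (RInt (gf x) a b - L) < m) in Hb.
  assert (E : RInt (gf x) a b = RInt (gf x) a 1 + m + RInt (gf x) 2 b).
  { unfold m. rewrite <- (RInt_Chasles (gf x) a 2 b) by (apply gf_ex_RInt; lra).
    rewrite <- (RInt_Chasles (gf x) a 1 2) by (apply gf_ex_RInt; lra). reflexivity. }
  assert (0 <= RInt (gf x) a 1).
  { apply RInt_ge_0. lra. apply gf_ex_RInt; lra. intros; left; apply gf_pos. }
  assert (0 <= RInt (gf x) 2 b).
  { apply RInt_ge_0. lra. apply gf_ex_RInt; lra. intros; left; apply gf_pos. }
  rewrite E in Hb. rewrite Rabs_right in Hb by lra. lra.
Qed.

Lemma D_mult' f g x df dg : is_derive f x df -> is_derive g x dg ->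
  is_derive (fun y => f y * g y) x (df * g x + f x * dg).
Proof. intros H1 H2. exact (is_derive_mult f g x df dg H1 H2 Rmult_comm). Qed.

Definition gB x s := - (Rpower s x * exp (- s)).
Definition gh x s := gf (x + 1) s - x * gf x s.

Lemma gB_derive x s : 0 < s -> is_derive (gB x) s (gh x s).
Proof.
  intro Hs. unfold gB, gh, gf. replace (x + 1 - 1) with x by ring.
  eapply D_eq.
  - apply (is_derive_opp (fun s => Rpower s x * exp (- s))).
    apply D_mult'. apply is_derive_Rpower_l; auto.
    assert (Hd : is_derive (fun u => exp (- u)) s (- exp (- s))). { auto_derive; auto. ring. }
    exact Hd.
  - change (opp (x * Rpower s (x - 1) * exp (- s) + Rpower s x * - exp (- s)) =
        Rpower s x * exp (- s) - x * (Rpower s (x - 1) * exp (- s))).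
    unfold opp; simpl. ring.
Qed.

Lemma gB_lim0 x : 0 < x -> filterlim (gB x) (at_right 0) (locally 0).
Proof.
  intro Hx. apply filterlim_locally. intros [e He].
  exists (mkposreal (Rpower e (/ x)) (Rpower_pos' _ _)). intros s Hs Hs0.
  apply ballR' in Hs. simpl in Hs. rewrite Rminus_0_r, Rabs_right in Hs by lra.
  apply ballR. simpl. rewrite Rminus_0_r. unfold gB. rewrite Rabs_Ropp.
  pose proof (exp_pos (- s)). pose proof (Rpower_pos' s x).
  rewrite Rabs_right by nra.
  assert (Rpower s x < e).
  { assert (E : Rpower (Rpower e (/ x)) x = e).
    { rewrite Rpower_mult. replace (/ x * x) with 1 by (field; lra). apply Rpower_1; auto. }
    apply Rlt_le_trans with (Rpower (Rpower e (/ x)) x). apply Rlt_Rpower_l; auto. lra. }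
  assert (exp (- s) <= 1) by (rewrite <- exp_0; left; apply exp_increasing; lra).
  nra.
Qed.

Lemma gB_liminf x : 0 < x -> filterlim (gB x) (Rbar_locally p_infty) (locally 0).
Proof.
  intro Hx. destruct (tail_bound (x + 1) ltac:(lra)) as [K [HK HKb]].
  apply filterlim_locally. intros [e He].
  exists (Rmax 1 (- 2 * ln (e / (2 * K)))). intros s Hs.
  assert (H1 : 1 <= s) by (pose proof (Rmax_l 1 (- 2 * ln (e / (2 * K)))); lra).
  assert (H2 : - s / 2 < ln (e / (2 * K))) by (pose proof (Rmax_r 1 (- 2 * ln (e / (2 * K)))); lra).
  apply ballR. simpl. rewrite Rminus_0_r. unfold gB. rewrite Rabs_Ropp.
  specialize (HKb s H1). unfold gf in HKb. replace (x + 1 - 1) with x in HKb by ring.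
  pose proof (exp_pos (- s)). pose proof (Rpower_pos' s x).
  rewrite Rabs_right by nra.
  assert (exp (- s / 2) < e / (2 * K)).
  { rewrite <- (exp_ln (e / (2 * K))). apply exp_increasing; auto. apply Rdiv_lt_0_compat; lra. }
  apply (Rmult_lt_compat_l K) in H3; auto.
  replace (K * (e / (2 * K))) with (e / 2) in H3 by (field; lra). lra.
Qed.

Lemma gh_cont x s : 0 < s -> continuous (gh x) s.
Proof.
  intro Hs. unfold gh.
  apply (continuous_minus (gf (x + 1)) (fun y => x * gf x y)).
  apply gf_cont; auto.
  apply (continuous_scal_r x (gf x)). apply gf_cont; auto.
Qed.

Lemma gamma_rec x : 0 < x -> Gamma (x + 1) = x * Gamma x.
Proof.
  intro Hx.
  destruct (gamma_ex x Hx) as [L0 H0]. destruct (gamma_ex (x + 1) ltac:(lra)) as [L1 H1].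
  rewrite (gamma_val _ _ H0), (gamma_val _ _ H1).
  pose proof (is_RInt_gen_minus _ _ _ _ H1 (is_RInt_gen_scal _ x _ H0)) as Hd.
  assert (Hreg : forall P : R * R -> Prop, (forall a b, 0 < a -> 0 < b -> P (a, b)) ->
     filter_prod (at_right 0) (Rbar_locally p_infty) P).
  { intros P HP. apply (Filter_prod _ _ _ (fun a => 0 < a < 1) (fun b => 0 < b)).
    apply loc0; lra. apply locinf. intros a b Ha Hb. apply HP; lra. }
  assert (HB : is_RInt_gen (Derive (gB x)) (at_right 0) (Rbar_locally p_infty) (0 - 0)).
  { apply is_RInt_gen_Derive.
    - apply Hreg. intros a b Ha Hb s Hs. simpl in Hs.
      assert (0 < Rmin a b) by (apply Rmin_pos; auto). eexists. apply gB_derive. lra.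
    - apply Hreg. intros a b Ha Hb s Hs. simpl in Hs.
      assert (0 < Rmin a b) by (apply Rmin_pos; auto).
      apply (continuous_ext_loc _ (gh x)).
      + exists (mkposreal s ltac:(lra)). intros y Hy. apply ballR' in Hy. simpl in Hy.
        symmetry. apply is_derive_unique. apply gB_derive.
        apply Rabs_def2 in Hy. lra.
      + apply gh_cont. lra.
    - apply gB_lim0; auto.
    - apply gB_liminf; auto. }
  assert (HB' : is_RInt_gen (fun y => minus (gf (x + 1) y) (scal x (gf x y))) (at_right 0) (Rbar_locally p_infty) (0 - 0)).
  { apply (is_RInt_gen_ext (Derive (gB x))); auto.
    apply Hreg. intros a b Ha Hb s Hs. simpl in Hs.
    assert (0 < Rmin a b) by (apply Rmin_pos; auto).
    apply is_derive_unique. apply gB_derive. lra. }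
  pose proof (is_RInt_gen_unique _ _ Hd) as E1. pose proof (is_RInt_gen_unique _ _ HB') as E2.
  assert (E : minus L1 (scal x L0) = 0 - 0). { rewrite <- E1, <- E2. reflexivity. }
  change (L1 - x * L0 = 0 - 0) in E. lra.
Qed.


Lemma strict_decr (u : nat -> R) : (forall l, u (S l) < u l) -> forall l1 l2, (l1 < l2)%nat -> u l2 < u l1.
Proof.
  intros H l1 l2 Hl. induction l2 as [|l2 IH]; [lia|].
  destruct (Nat.eq_dec l1 l2) as [->|Hne]. apply H.
  specialize (IH ltac:(lia)). specialize (H l2). lra.
Qed.

Lemma gamma_step_ineq gb gc c b F0 F1 T : 0 < gb -> 0 < gc -> 0 < c -> 0 <= T ->
  T * ((c - b) ^ 2 * F1 ^ 2) < T * (c ^ 2 * F0 ^ 2) -> 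
  ((c - b) * gb) ^ 2 / (c * gc) ^ 2 * F1 ^ 2 * T < gb ^ 2 / gc ^ 2 * F0 ^ 2 * T.
Proof.
  intros Hgb Hgc Hc HT H.
  replace (((c - b) * gb) ^ 2 / (c * gc) ^ 2 * F1 ^ 2 * T) with (gb ^ 2 / (gc ^ 2 * c ^ 2) * (T * ((c - b) ^ 2 * F1 ^ 2))) by (field; lra).
  replace (gb ^ 2 / gc ^ 2 * F0 ^ 2 * T) with (gb ^ 2 / (gc ^ 2 * c ^ 2) * (T * (c ^ 2 * F0 ^ 2))) by (field; lra).
  apply Rmult_lt_compat_l; auto. apply Rdiv_lt_0_compat. nra. 
  apply Rmult_lt_0_compat; nra.
Qed.

Theorem lemma2p5 (n : nat) (t : R) :
  (3 <= n)%nat -> 0 < t < 1 ->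
  (forall alpha : R, 0 < alpha < INR n ->
     forall l1 l2 : nat, (l1 < l2)%nat ->
       (Gamma (INR l2 + (INR n - alpha) / 2) ^ 2 / Gamma (INR l2 + INR n / 2) ^ 2)
         * hyp2F1 (INR l2 + (INR n + alpha) / 2 - 1) (alpha / 2) (INR l2 + INR n / 2) t ^ 2
       <
       (Gamma (INR l1 + (INR n - alpha) / 2) ^ 2 / Gamma (INR l1 + INR n / 2) ^ 2)
         * hyp2F1 (INR l1 + (INR n + alpha) / 2 - 1) (alpha / 2) (INR l1 + INR n / 2) t ^ 2)
  /\
  (forall alpha : R, alpha <= 0 ->
     forall l1 l2 : nat, (l1 < l2)%nat ->
       (Gamma (INR l2 + (INR n - alpha) / 2) ^ 2 / Gamma (INR l2 + INR n / 2) ^ 2)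
         * t ^ l2
         * hyp2F1 (INR l2 + (INR n + alpha) / 2 - 1) (alpha / 2) (INR l2 + INR n / 2) t ^ 2
       <
       (Gamma (INR l1 + (INR n - alpha) / 2) ^ 2 / Gamma (INR l1 + INR n / 2) ^ 2)
         * t ^ l1
         * hyp2F1 (INR l1 + (INR n + alpha) / 2 - 1) (alpha / 2) (INR l1 + INR n / 2) t ^ 2).
Proof.
  intros Hn Ht.
  assert (Hn3 : 3 <= INR n) by (replace 3 with (INR 3) by (simpl; ring); apply le_INR; auto).
  split.
  - intros alpha Ha.
    apply (strict_decr (fun l => (Gamma (INR l + (INR n - alpha) / 2) ^ 2 / Gamma (INR l + INR n / 2) ^ 2)
         * hyp2F1 (INR l + (INR n + alpha) / 2 - 1) (alpha / 2) (INR l + INR n / 2) t ^ 2)).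
    intro l. cbv beta.
    set (c := INR l + INR n / 2). set (b := alpha / 2).
    assert (Hl : 0 <= INR l) by apply pos_INR.
    assert (Hc : 1 < c) by (unfold c; lra).
    assert (Hb : 0 < b) by (unfold b; lra).
    assert (Hbc : b < c) by (unfold b, c; lra).
    replace (INR (S l) + (INR n - alpha) / 2) with ((c - b) + 1) by (rewrite S_INR; unfold c, b; field).
    replace (INR (S l) + INR n / 2) with (c + 1) by (rewrite S_INR; unfold c; field).
    replace (INR (S l) + (INR n + alpha) / 2 - 1) with (c + b) by (rewrite S_INR; unfold c, b; field).
    replace (INR l + (INR n - alpha) / 2) with (c - b) by (unfold c, b; field).
    replace (INR l + (INR n + alpha) / 2 - 1) with (c + b - 1) by (unfold c, b; field).
    fold c.
    rewrite !gamma_rec by lra.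
    pose proof (gamma_pos (c - b) ltac:(lra)). pose proof (gamma_pos c ltac:(lra)).
    assert (Hs : (c - b) ^ 2 * hyp2F1 (c + b) b (c + 1) t ^ 2 < c ^ 2 * hyp2F1 (c + b - 1) b c t ^ 2).
    { destruct (Rlt_dec b 1). apply step1_euler; auto; lra. apply step1_orig; auto; lra. }
    rewrite <- (Rmult_1_r (_ / _ * hyp2F1 (c + b) _ _ _ ^ 2)).
    rewrite <- (Rmult_1_r (_ / _ * hyp2F1 (c + b - 1) _ _ _ ^ 2)).
    apply gamma_step_ineq; auto; lra.
  - intros alpha Ha.
    apply (strict_decr (fun l => (Gamma (INR l + (INR n - alpha) / 2) ^ 2 / Gamma (INR l + INR n / 2) ^ 2)
         * t ^ l * hyp2F1 (INR l + (INR n + alpha) / 2 - 1) (alpha / 2) (INR l + INR n / 2) t ^ 2)).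
    intro l. cbv beta.
    set (c := INR l + INR n / 2). set (b := alpha / 2).
    assert (Hl : 0 <= INR l) by apply pos_INR.
    assert (Hc : 1 < c) by (unfold c; lra).
    assert (Hb : b <= 0) by (unfold b; lra).
    replace (INR (S l) + (INR n - alpha) / 2) with ((c - b) + 1) by (rewrite S_INR; unfold c, b; field).
    replace (INR (S l) + INR n / 2) with (c + 1) by (rewrite S_INR; unfold c; field).
    replace (INR (S l) + (INR n + alpha) / 2 - 1) with (c + b) by (rewrite S_INR; unfold c, b; field).
    replace (INR l + (INR n - alpha) / 2) with (c - b) by (unfold c, b; field).
    replace (INR l + (INR n + alpha) / 2 - 1) with (c + b - 1) by (unfold c, b; field).
    fold c.
    rewrite !gamma_rec by lra.
    pose proof (gamma_pos (c - b) ltac:(lra)). pose proof (gamma_pos c ltac:(lra)).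
    pose proof (step2 c b t Hc Hb Ht) as Hs.
    assert (HT : 0 < t ^ l) by (apply pow_lt; lra).
    set (gb := Gamma (c - b)) in *. set (gc := Gamma c) in *.
    set (F1 := hyp2F1 (c + b) b (c + 1) t) in *. set (F0 := hyp2F1 (c + b - 1) b c t) in *.
    simpl pow at 3.
    replace (((c - b) * gb) ^ 2 / (c * gc) ^ 2 * (t * t ^ l) * F1 ^ 2)
      with (gb ^ 2 / (gc ^ 2 * c ^ 2) * t ^ l * (t * (c - b) ^ 2 * F1 ^ 2)) by (field; lra).
    replace (gb ^ 2 / gc ^ 2 * t ^ l * F0 ^ 2)
      with (gb ^ 2 / (gc ^ 2 * c ^ 2) * t ^ l * (c ^ 2 * F0 ^ 2)) by (field; lra).
    apply Rmult_lt_compat_l; auto.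
    apply Rmult_lt_0_compat; auto. apply Rdiv_lt_0_compat. nra. apply Rmult_lt_0_compat; nra.
Qed.
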